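(* Let $\Phi_s,\Phi_b$ be pleasant UCQs over $\Sigma$ and let $D$ be a structure over $\Sigma$ with $\Phi_s\odot D>\Phi_b\odot D$. Then $\mathtt{cq}(\Phi_s)\odot\text{Þ}(D)>\mathtt{cq}(\Phi_b)\odot\text{Þ}(D)$; in particular $\mathtt{cq}(\Phi_s)\not\le_\forall\mathtt{cq}(\Phi_b)$.
   Context: Structures are finite relational structures; constants are interpreted in the vertex set $\mathcal V(D)$. For a CQ $\phi$ and structure $D$, $\phi\odot D$ is the number of maps $h:var(\phi)\to\mathcal V(D)$ sending every atom of $\phi$ (with constants interpreted) to a fact of $D$; for a UCQ $\Phi=\bigvee_j\phi_j$ (pairwise variable-disjoint disjuncts) $\Phi\odot D:=\sum_j\phi_j\odot D$. $\Psi_s\le_\forall\Psi_b$ means $\Psi_s\odot D\le\Psi_b\odot D$ for all structures $D$. A query is pleasant if each atom contains at least one variable. Fix a relational signature $\Sigma$ (possibly with constants) and $\Sigma^+=\Sigma\cup\{V,R,\mathsf{mars},\mathsf{venus}\}$ with $V,R$ fresh binary relations and $\mathsf{mars},\mathsf{venus}$ fresh constants. Let $\mathtt{Good}$ be the variable-free CQ consisting of $V(\mathsf{venus},\mathsf{venus})$, $R(\mathsf{venus},\mathsf{venus})$ and all atoms $A(t_1,\dots,t_k)$ with $A\in\Sigma$, each $t_i$ either $\mathsf{venus}$ or a constant of $\Sigma$, and $\mathsf{venus}$ occurring among the $t_i$ at least once. $\mathtt{Planet}(x):=R(\mathsf{venus},x)\wedge R(x,\mathsf{venus})$. $x\rhd\phi:=\phi\wedge\mathtt{Planet}(x)\wedge\bigwedge_{y\in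 var(\phi)}V(x,y)$. $\mathtt{RClique}_J(x_1,\dots,x_J):=\bigwedge_{j}\mathtt{Planet}(x_j)\wedge\bigwedge_{j<j'}(R(x_j,x_{j'})\wedge R(x_{j'},x_j))$. For a pleasant UCQ $\Phi=\bigvee_{j=1}^J\phi_j$ over $\Sigma$, $\mathtt{cq}(\Phi):=\mathtt{RClique}_J(x_1,\dots,x_J)\wedge\bigwedge_{j=1}^J(x_j\rhd\phi_j)$ with fresh variables $x_1,\dots,x_J$. The marsification $\text{Þ}(D)$ of a structure $D$ over $\Sigma$ is the structure over $\Sigma^+$ whose elements are those of $D$ together with two new distinct elements interpreting $\mathsf{mars}$ and $\mathsf{venus}$, and whose facts are: all atoms of $\mathtt{Good}\wedge\mathtt{Planet}(\mathsf{mars})$, all facts of $D$, and $V(\mathsf{mars},a)$ for every $a\in\mathcal V(D)$. *)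

(* Defs.v *)
From Stdlib Require List.
From HB Require Import structures.
From mathcomp Require Import all_boot all_order.
Set Implicit Arguments. Unset Strict Implicit. Unset Printing Implicit Defensive.

Record signature := Sig {
  sRel : eqType;
  sCon : finType;
  sar  : sRel -> nat }.
Arguments sar : clear implicits.

Inductive term (X C : Type) := TVar of X | TCon of C.
Arguments TVar {X C} x.
Arguments TCon {X C} c.

Record atom (R X C : Type) := Atom { arel : R; aargs : seq (term X C) }.
Arguments Atom {R X C} arel aargs.

Definition cq (S : signature) (X : Type) := seq (atom (sRel S) X (sCon S)).
Definition ucq (S : signature) (X : Type) := seq (cq S X).

Definition term_var (X C : Type) (t : term X C) : option X :=
  if t is TVar x then Some x else None.

Definition qvars (S : signature) (X : eqType) (q : cq S X) : seq X :=
  undup (pmap (@term_var X (sCon S)) (flatten (map (@aargs _ _ _) q))).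

Definition cq_over (S : signature) (X : Type) (q : cq S X) : Prop :=
  forall a, List.In a q -> size (aargs a) = sar S (arel a).
Definition ucq_over (S : signature) (X : Type) (Phi : ucq S X) : Prop :=
  forall q, List.In q Phi -> cq_over q.

Definition pleasant_cq (S : signature) (X : Type) (q : cq S X) : Prop :=
  forall a, List.In a q -> exists2 t, List.In t (aargs a) & exists x, t = TVar x.
Definition pleasant_ucq (S : signature) (X : Type) (Phi : ucq S X) : Prop :=
  forall q, List.In q Phi -> pleasant_cq q.

Record structure (S : signature) := Struct {
  elt  : finType;
  cint : sCon S -> elt;
  fact : sRel S -> seq elt -> bool }.
Arguments elt {S} s.
Arguments cint {S} s c.
Arguments fact {S} s A l.
Arguments Struct {S} elt cint fact.

Definition wf_structure (S : signature) (D : structure S) : Prop :=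
  forall A s, fact D A s -> size s = sar S A.

Section Count.
Variables (S : signature) (X : choiceType) (D : structure S).

Definition tval (vs : seq X) (h : {ffun seq_sub vs -> elt D})
  (t : term X (sCon S)) : option (elt D) :=
  match t with
  | TVar x => omap h (insub x)
  | TCon c => Some (cint D c)
  end.

Definition sat_atom (vs : seq X) (h : {ffun seq_sub vs -> elt D})
  (a : atom (sRel S) X (sCon S)) : bool :=
  let ev := map (tval h) (aargs a) in
  all (fun o => o != None) ev && fact D (arel a) (pmap id ev).

Definition cq_count (q : cq S X) : nat :=
  #|[pred h : {ffun seq_sub (qvars q) -> elt D} | all (sat_atom h) q]|.

Definition ucq_count (Phi : ucq S X) : nat := \sum_(q <- Phi) cq_count q.
End Count.

Definition le_forall (S : signature) (X1 X2 : choiceType)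
  (q1 : cq S X1) (q2 : cq S X2) : Prop :=
  forall D : structure S, wf_structure D -> cq_count D q1 <= cq_count D q2.

(* relations: inl A for A in Sigma, inr false = V, inr true = R (both binary);
   constants: inl c for c in Sigma, inr false = mars, inr true = venus. *)
Definition sigplus (S : signature) : signature :=
  @Sig (sRel S + bool)%type (sCon S + bool)%type
    (fun r => match r with inl A => sar S A | inr _ => 2 end).

Definition relV {R : Type} : (R + bool)%type := inr false.
Definition relR {R : Type} : (R + bool)%type := inr true.
Definition cMars {C : Type} : (C + bool)%type := inr false.
Definition cVenus {C : Type} : (C + bool)%type := inr true.

Section Cq.
Variables (S : signature) (X : choiceType).
Notation Y := (nat * option X)%type.
(* variables of cq(Phi): (j, None) is the fresh x_j, (j, Some y) is variable y
   of the j-th disjunct (renaming the disjuncts apart). *)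
Definition xv (j : nat) : term Y (sCon S + bool) := TVar (j, None).
Definition tVenus : term Y (sCon S + bool) := TCon cVenus.

Definition lift_term (j : nat) (t : term X (sCon S)) : term Y (sCon S + bool) :=
  match t with TVar y => TVar (j, Some y) | TCon c => TCon (inl c) end.
Definition lift_cq (j : nat) (q : cq S X) : cq (sigplus S) Y :=
  [seq Atom (inl (arel a)) (map (lift_term j) (aargs a)) | a <- q].

Definition Planet (x : term Y (sCon S + bool)) : cq (sigplus S) Y :=
  [:: Atom relR [:: tVenus; x]; Atom relR [:: x; tVenus]].

Definition rhd (x : term Y (sCon S + bool)) (q : cq (sigplus S) Y) : cq (sigplus S) Y :=
  q ++ Planet x ++ [seq Atom relV [:: x; TVar y] | y <- qvars q].

Definition RClique (J : nat) : cq (sigplus S) Y :=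
  flatten [seq Planet (xv j) | j <- iota 0 J] ++
  flatten [seq [:: Atom relR [:: xv p.1; xv p.2]; Atom relR [:: xv p.2; xv p.1]]
          | p <- [seq (j, j') | j <- iota 0 J, j' <- iota 0 J] & p.1 < p.2].

Definition cqU (Phi : ucq S X) : cq (sigplus S) Y :=
  RClique (size Phi) ++
  flatten [seq rhd (xv j) (lift_cq j (nth [::] Phi j)) | j <- iota 0 (size Phi)].
End Cq.

Section Mars.
Variables (S : signature) (D : structure S).
Notation E := (elt D + bool)%type.
Definition eMars : E := inr false.
Definition eVenus : E := inr true.
Definition unl (e : E) : option (elt D) := if e is inl a then Some a else None.

(* interpretation of the atoms of Good (relations of Sigma): A(e_1..e_k),
   k = ar A, each e_i is venus or the value of a constant of Sigma,
   venus occurs at least once *)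
Definition good_sigma_fact (A : sRel S) (s : seq E) : bool :=
  [&& size s == sar S A, eVenus \in s &
      all (fun e => (e == eVenus) ||
             (if e is inl a then [exists c, cint D c == a] else false)) s].

Definition mars_fact (r : (sRel S + bool)%type) (s : seq E) : bool :=
  match r with
  | inl A => good_sigma_fact A s                          (* Good *)
             || (all (fun e => unl e != None) s && fact D A (pmap unl s)) (* D *)
  | inr false => (* V *)
      (s == [:: eVenus; eVenus])                          (* Good *)
      || (if s is [:: x; y] then (x == eMars) && (unl y != None) else false)
                                                          (* V(mars,a) *)
  | inr true => (* R *)
      (s == [:: eVenus; eVenus])                          (* Good *)
      || (s == [:: eVenus; eMars]) || (s == [:: eMars; eVenus]) (* Planet(mars) *)
  end.

Definition marsify : structure (sigplus S) :=
  @Struct (sigplus S) E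
    (fun c => match c with inl c => inl (cint D c) | inr b => inr b end)
    mars_fact.
End Mars.

(* Main.v *)
Require Import Defs.
From mathcomp Require Import all_boot all_order.
Set Implicit Arguments. Unset Strict Implicit. Unset Printing Implicit Defensive.

Section Generic.
Variables (S : signature) (Z : choiceType) (D : structure S).

Definition tv (f : Z -> elt D) (t : term Z (sCon S)) : elt D :=
  match t with TVar x => f x | TCon c => cint D c end.
Definition semT (f : Z -> elt D) (a : atom (sRel S) Z (sCon S)) : bool :=
  fact D (arel a) (map (tv f) (aargs a)).
Definition avars (a : atom (sRel S) Z (sCon S)) : seq Z :=
  pmap (@term_var Z (sCon S)) (aargs a).

Lemma mem_qvars_cons a (q : cq S Z) y :
  (y \in qvars (a :: q)) = (y \in avars a) || (y \in qvars q).
Proof. by rewrite /qvars !mem_undup /= pmap_cat mem_cat. Qed.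

Lemma mem_qvars_cat (q1 q2 : cq S Z) y :
  (y \in qvars (q1 ++ q2)) = (y \in qvars q1) || (y \in qvars q2).
Proof. by rewrite /qvars !mem_undup map_cat flatten_cat pmap_cat mem_cat. Qed.

Lemma mem_qvars_nil y : (y \in qvars ([::] : cq S Z)) = false.
Proof. by []. Qed.

Lemma avars_sub_qvars (q : cq S Z) a : List.In a q -> {subset avars a <= qvars q}.
Proof.
elim: q => //= b q IH [-> | /IH H] y Hy; rewrite mem_qvars_cons ?Hy //.
by rewrite H ?orbT.
Qed.

Lemma pmap_someE (T U : Type) (F : T -> U) (l : seq T) :
  pmap id (map (fun t => Some (F t)) l) = map F l.
Proof. by elim: l => //= t l ->. Qed.

Lemma tval_map (vs : seq Z) (h : {ffun seq_sub vs -> elt D}) (f : Z -> elt D)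
  (l : seq (term Z (sCon S))) :
  (forall y : seq_sub vs, h y = f (val y)) ->
  {subset pmap (@term_var Z (sCon S)) l <= vs} ->
  map (Defs.tval h) l = map (fun t => Some (tv f t)) l.
Proof.
move=> Hh; elim: l => //= t l IH Hs.
case: t Hs => [x|c] /= Hs.
- rewrite IH; last by move=> z Hz; apply: Hs; rewrite inE Hz orbT.
  case: insubP => [u _ <-|/negP []]; first by rewrite /= Hh.
  by apply: Hs; rewrite mem_head.
- by rewrite IH.
Qed.

Lemma sat_atomE (vs : seq Z) (h : {ffun seq_sub vs -> elt D}) (f : Z -> elt D) a :
  (forall y : seq_sub vs, h y = f (val y)) ->
  {subset avars a <= vs} -> sat_atom h a = semT f a.
Proof.
move=> Hh Hs; rewrite /sat_atom /semT (tval_map Hh Hs) pmap_someE.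
by rewrite all_map (@eq_all _ _ predT) ?all_predT.
Qed.

Lemma all_satE (vs : seq Z) (h : {ffun seq_sub vs -> elt D}) (f : Z -> elt D) (q : cq S Z) :
  (forall y : seq_sub vs, h y = f (val y)) ->
  (forall a, List.In a q -> {subset avars a <= vs}) ->
  all (sat_atom h) q = all (semT f) q.
Proof.
move=> Hh; elim: q => //= a q IH Hs.
rewrite (sat_atomE Hh) ?IH //; first by move=> b Hb; apply: Hs; right.
by apply: Hs; left.
Qed.

Lemma all_semT_in (f1 f2 : Z -> elt D) (q : cq S Z) :
  {in qvars q, f1 =1 f2} -> all (semT f1) q = all (semT f2) q.
Proof.
move=> H; suff: forall q', (forall a, List.In a q' -> List.In a q) ->
   all (semT f1) q' = all (semT f2) q' by apply.
elim=> //= a q' IH Hq; rewrite IH; last by move=> b Hb; apply: Hq; right.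
congr (_ && _); rewrite /semT; congr (fact _ _ _).
have Ha := avars_sub_qvars (Hq a (or_introl erefl)).
rewrite /avars in Ha; elim: (aargs a) Ha => //= t l IHl Hs.
case: t Hs => [x|c] /= Hs; rewrite IHl //.
- by rewrite H // Hs // mem_head.
- by move=> z Hz; apply: Hs; rewrite inE Hz orbT.
Qed.
End Generic.
Lemma all_flatten (T : Type) (p : pred T) (s : seq (seq T)) :
  all p (flatten s) = all (all p) s.
Proof. by elim: s => //= x s IH; rewrite all_cat IH. Qed.

Lemma In_nth (T : Type) (s : seq T) x0 k : k < size s -> List.In (nth x0 s k) s.
Proof. elim: s k => //= x s IH [|k] /= H; [by left | right; exact: IH]. Qed.

Section Vars.
Variables (S : signature) (X : choiceType).
Notation Y := (nat * option X)%type.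

Lemma mem_qvars_flatten (T : Type) (F : T -> cq (sigplus S) Y) s y :
  (y \in qvars (flatten (map F s))) = has (fun k => y \in qvars (F k)) s.
Proof. by elim: s => //= k s IH; rewrite mem_qvars_cat IH. Qed.

Lemma mem_qvars_map (T : Type) (G : T -> atom _ Y _) s y :
  (y \in qvars (S := sigplus S) (map G s)) = has (fun z => y \in avars (G z)) s.
Proof. by elim: s => //= k s IH; rewrite mem_qvars_cons IH. Qed.

Lemma vflat_lift k (q : cq S X) :
  pmap (@term_var _ _) (flatten (map (@aargs _ _ _) (lift_cq k q))) =
  map (fun x => (k, Some x)) (pmap (@term_var _ _) (flatten (map (@aargs _ _ _) q))).
Proof.
elim: q => //= a q IH; rewrite !pmap_cat map_cat IH; congr (_ ++ _).
by elim: (aargs a) => //= t l IHl; case: t => [x|c] /=; rewrite IHl.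
Qed.

Lemma qvars_lift k (q : cq S X) y :
  y \in qvars (lift_cq k q) -> exists2 x, y = (k, Some x) & x \in qvars q.
Proof.
rewrite /qvars mem_undup vflat_lift => /mapP [x Hx ->].
by exists x; rewrite ?mem_undup.
Qed.

Lemma qvars_lift2 k (q : cq S X) x :
  x \in qvars q -> (k, Some x) \in qvars (lift_cq k q).
Proof.
rewrite /qvars !mem_undup vflat_lift => Hx.
by apply/mapP; exists x.
Qed.

Lemma qvars_planet k y : (y \in qvars (Planet (@xv S X k))) = (y == (k, None)).
Proof. by rewrite /Planet !mem_qvars_cons mem_qvars_nil /avars /= !inE orbF orbb. Qed.

Variable Phi : ucq S X.
Notation J := (size Phi).
Notation phi k := (nth [::] Phi k).

Lemma mem_V y : y \in qvars (cqU Phi) ->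
  y.1 < J /\ (y.2 = None \/ y \in qvars (lift_cq y.1 (phi y.1))).
Proof.
rewrite /cqU /RClique !mem_qvars_cat !mem_qvars_flatten.
move/orP => [/orP [] | ].
- case/hasP => k; rewrite mem_iota add0n => /andP [_ Hk].
  by rewrite qvars_planet => /eqP ->; split => //; left.
- case/hasP => p; rewrite mem_filter; case/andP => Hlt.
  case/allpairsP => [[a b] [Ha Hb ->]] /=.
  rewrite !mem_qvars_cons mem_qvars_nil /avars /= !inE orbF.
  move: Ha Hb; rewrite !mem_iota !add0n => /andP [_ Ha] /andP [_ Hb].
  rewrite /= in Ha Hb.
  move=> Hy; have [-> | ->] : y = (a, None) \/ y = (b, None).
    by case/or3P: Hy => [/orP [] | | ] /eqP ->; [left|right|right|left].
  1,2: by split; [|left].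
- case/hasP => k; rewrite mem_iota add0n => /andP [_ Hk].
  rewrite /rhd !mem_qvars_cat qvars_planet.
  case/or3P; last rewrite mem_qvars_map.
  + move=> Hy; case: (qvars_lift Hy) => x Ey _.
    have E1 : y.1 = k by rewrite Ey.
    by rewrite E1; split => //; right.
  + by move/eqP => ->; split => //; left.
  + case/hasP => z Hz; rewrite /avars /= !inE => /orP [/eqP -> | /eqP ->].
      by split => //; left.
    case: (qvars_lift Hz) => x Ey _.
    have E1 : z.1 = k by rewrite Ey.
    by rewrite E1; split => //; right.
Qed.

Lemma memV_none k : k < J -> (k, None) \in qvars (cqU Phi).
Proof.
move=> Hk; rewrite /cqU /RClique !mem_qvars_cat !mem_qvars_flatten.
apply/orP; left; apply/orP; left; apply/hasP; exists k.
  by rewrite mem_iota add0n Hk.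
by rewrite qvars_planet.
Qed.

Lemma memV_some k x : k < J -> x \in qvars (phi k) -> (k, Some x) \in qvars (cqU Phi).
Proof.
move=> Hk Hx; rewrite /cqU mem_qvars_cat mem_qvars_flatten.
apply/orP; right; apply/hasP; exists k.
  by rewrite mem_iota add0n Hk.
by rewrite /rhd !mem_qvars_cat qvars_lift2.
Qed.
End Vars.

Lemma In_mem (T : eqType) (x : T) s : List.In x s -> x \in s.
Proof. by elim: s => //= y s IH [-> | /IH H]; rewrite inE ?eqxx ?H ?orbT. Qed.

Section Sem.
Variables (S : signature) (X : choiceType) (D : structure S).
Notation Y := (nat * option X)%type.
Notation E := (elt D + bool)%type.
Notation M := (marsify D).
Notation semM := (@semT (sigplus S) _ M).
Notation xv := (@xv S X).
Notation ven := (eVenus D).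
Notation mar := (eMars D).

Definition lift_atom k (a : atom (sRel S) X (sCon S)) : atom (sRel (sigplus S)) Y (sCon (sigplus S)) :=
  Atom (inl (arel a)) (map (lift_term k) (aargs a)).

Lemma sem_planet (f : Y -> E) k :
  all (semM f) (Planet (xv k)) = (f (k, None) == ven) || (f (k, None) == mar).
Proof. by rewrite /= /semT /=; case: (f (k, None)) => [a|[]]. Qed.


Definition vm (e : E) := (e == ven) || (e == mar).

Lemma sem_R_ok (f : Y -> E) a b :
  vm (f (a, None)) -> vm (f (b, None)) ->
  (f (a, None) == ven) || (f (b, None) == ven) ->
  semM f (Atom relR [:: xv a; xv b]).
Proof.
rewrite /vm /semT /=.
by case: (f (a, None)) => [x|[]] //; case: (f (b, None)) => [y|[]].
Qed.

Lemma sem_R_mm (f : Y -> E) a b :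
  f (a, None) = mar -> f (b, None) = mar ->
  semM f (Atom relR [:: xv a; xv b]) = false.
Proof. by rewrite /semT /= => -> ->. Qed.

Lemma sem_V_venus (f : Y -> E) k y : f (k, None) = ven ->
  semM f (Atom relV [:: xv k; TVar y]) = (f y == ven).
Proof. by rewrite /semT /= => ->; case: (f y) => [x|[]]. Qed.

Lemma sem_V_mars (f : Y -> E) k y : f (k, None) = mar ->
  semM f (Atom relV [:: xv k; TVar y]) = (unl (f y) != None).
Proof. by rewrite /semT /= => ->; case: (f y) => [x|[]]. Qed.

Lemma sem_lift_venus (f : Y -> E) k a :
  size (aargs a) = sar S (arel a) ->
  (exists2 t, List.In t (aargs a) & exists x, t = TVar x) ->
  (forall x, f (k, Some x) = ven) -> semM f (lift_atom k a).
Proof.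
move=> Hsz [t Ht [x Hx]] Hf.
rewrite /semT /lift_atom /= /good_sigma_fact size_map size_map Hsz eqxx /=.
apply/orP; left; apply/andP; split.
  apply: In_mem; rewrite -map_comp; subst t.
  have := List.in_map (@tv (sigplus S) _ M f \o lift_term k) _ _ Ht; by rewrite /= Hf.
rewrite all_map; elim: (aargs a) => //= t' l ->; rewrite andbT.
case: t' => [z|c] /=; first by rewrite Hf eqxx.
by apply/existsP; exists c.
Qed.

Lemma sem_lift_g (f : Y -> E) k (vs : seq X) (g : {ffun seq_sub vs -> elt D}) a :
  (forall x : seq_sub vs, f (k, Some (val x)) = inl (g x)) ->
  {subset avars a <= vs} -> semM f (lift_atom k a) = sat_atom g a.
Proof.
move=> Hf Hs.
have [l [E1 E2 E3]] : exists l, [/\ map (@tv (sigplus S) _ M f) (map (lift_term k) (aargs a)) = map inl l,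
    all (fun o => o != None) (map (Defs.tval g) (aargs a)) &
    pmap id (map (Defs.tval g) (aargs a)) = l].
  rewrite /avars in Hs; elim: (aargs a) Hs => [|t ts IH] Hs; first by exists [::].
  case: t Hs => [x|c] /= Hs.
  - have [|l [E1 E2 E3]] := IH; first by move=> z Hz; apply: Hs; rewrite inE Hz orbT.
    case: insubP => [u _ Eu|/negP []]; last by apply: Hs; rewrite mem_head.
    exists (g u :: l); rewrite /= E2 E3 -E1 -Eu Hf; split => //.
  - have [l [E1 E2 E3]] := IH Hs.
    by exists (cint D c :: l); rewrite /= E1 E2 E3.
rewrite /semT /lift_atom /= E1 /sat_atom E2 E3 /=.
have -> : good_sigma_fact (arel a) (map inl l) = false.
  rewrite /good_sigma_fact; apply/negbTE; apply/negP => /and3P [_ /mapP [z _] //].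
have -> : all (fun e : E => @unl S D e != None) (map inl l) by rewrite all_map; apply/allP.
by have -> : pmap (@unl S D) (map inl l) = l by elim: l {E1 E3} => //= z l ->.
Qed.

End Sem.

Section Main.
Variables (S : signature) (X : choiceType) (D : structure S) (Phi : ucq S X).
Hypotheses (HPo : ucq_over Phi) (HPp : pleasant_ucq Phi).
Notation Y := (nat * option X)%type.
Notation E := (elt D + bool)%type.
Notation M := (marsify D).
Notation semM := (@semT (sigplus S) _ M).
Notation xv := (@xv S X).
Notation ven := (eVenus D).
Notation mar := (eMars D).
Notation J := (size Phi).
Notation phi k := (nth [::] Phi k).
Notation U := (cqU Phi).
Notation vm := (@vm S D).

Lemma all_lift (f : Y -> E) k (q : cq S X) :
  all (semM f) (lift_cq k q) = all (fun a => semM f (lift_atom k a)) q.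
Proof. by rewrite all_map. Qed.

Definition pairsJ (n : nat) := [seq (j, j') | j <- iota 0 n, j' <- iota 0 n].

Lemma satU_E (f : Y -> E) : all (semM f) U =
  [&& all (fun k => all (semM f) (Planet (xv k))) (iota 0 J),
      all (fun p : nat * nat => (p.1 < p.2) ==>
         all (semM f) [:: Atom relR [:: xv p.1; xv p.2]; Atom relR [:: xv p.2; xv p.1]])
        (pairsJ J) &
      all (fun k => [&& all (semM f) (lift_cq k (phi k)), all (semM f) (Planet (xv k)) &
         all (fun y => semM f (Atom relV [:: xv k; TVar y])) (qvars (lift_cq k (phi k)))]) (iota 0 J)].
Proof.
rewrite [in LHS]/cqU [in LHS]/RClique !all_cat -andbA; congr [&& _, _ & _].
- by rewrite all_flatten all_map.
- by rewrite all_flatten all_map all_filter.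
- rewrite all_flatten all_map; apply: eq_all => k /=.
  by rewrite /rhd !all_cat all_map.
Qed.


Lemma satU_inv (f : Y -> E) : all (semM f) U ->
  [/\ forall k, k < J -> vm (f (k, None)),
      forall k k', k < k' -> k' < J -> ~~ ((f (k, None) == mar) && (f (k', None) == mar)),
      forall k, k < J -> all (semM f) (lift_cq k (phi k)) &
      forall k y, k < J -> y \in qvars (lift_cq k (phi k)) ->
         semM f (Atom relV [:: xv k; TVar y])].
Proof.
rewrite satU_E => /and3P [H1 H2 H3]; split.
- move=> k Hk; move/allP: H1 => /(_ k); rewrite mem_iota add0n Hk => /(_ isT).
  by rewrite sem_planet.
- move=> k k' Hkk Hk'; move/allP: H2 => /(_ (k, k')).
  have Hin : (k, k') \in pairsJ J.
    apply/allpairsP; exists (k, k'); rewrite /= !mem_iota !add0n Hk' (ltn_trans Hkk Hk').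
    by [].
  move/(_ Hin)/implyP/(_ Hkk)/andP => [HR _].
  apply/negP => /andP [/eqP Ha /eqP Hb].
  by move: HR; rewrite (sem_R_mm Ha Hb).
- move=> k Hk; move/allP: H3 => /(_ k); rewrite mem_iota add0n Hk => /(_ isT).
  by case/and3P.
- move=> k y Hk Hy; move/allP: H3 => /(_ k); rewrite mem_iota add0n Hk => /(_ isT).
  by case/and3P => _ _ /allP; apply.
Qed.

Lemma satU_intro (f : Y -> E) :
  (forall k, k < J -> vm (f (k, None))) ->
  (forall k k', k < k' -> k' < J -> (f (k, None) == ven) || (f (k', None) == ven)) ->
  (forall k, k < J -> all (semM f) (lift_cq k (phi k))) ->
  (forall k y, k < J -> y \in qvars (lift_cq k (phi k)) ->
         semM f (Atom relV [:: xv k; TVar y])) ->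
  all (semM f) U.
Proof.
move=> H1 H2 H3 H4; rewrite satU_E; apply/and3P; split.
- apply/allP => k; rewrite mem_iota add0n => /andP [_ Hk].
  by rewrite sem_planet; apply: H1.
- apply/allP => p /allpairsP [[a b] [/= Ha Hb ->]] /=; apply/implyP => Hab.
  move: Ha Hb; rewrite !mem_iota !add0n => /andP [_ Ha] /andP [_ Hb].
  have Ha' : a < J by apply: ltn_trans Hab Hb.
  rewrite andbT; apply/andP; split; apply: sem_R_ok; rewrite ?H1 //.
    exact: H2.
  by rewrite orbC; apply: H2.
- apply/allP => k; rewrite mem_iota add0n => /andP [_ Hk].
  apply/and3P; split; [exact: H3 | rewrite sem_planet; exact: H1 |].
  by apply/allP => y Hy; apply: H4.
Qed.


Notation V := (qvars U).
Notation H := {ffun seq_sub V -> elt M}.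

Definition ext (h : H) (y : Y) : E := odflt ven (omap h (insub y)).

Lemma extE (h : H) (u : seq_sub V) : ext h (val u) = h u.
Proof. by rewrite /ext valK. Qed.

Lemma P_E (h : H) : all (sat_atom h) U = all (semM (ext h)) U.
Proof.
apply: all_satE => [u|a Ha]; first by rewrite extE.
exact: avars_sub_qvars.
Qed.

Lemma all_lift_g (f : Y -> E) k (vs : seq X) (g : {ffun seq_sub vs -> elt D}) (q : cq S X) :
  (forall x : seq_sub vs, f (k, Some (val x)) = inl (g x)) ->
  (forall a, List.In a q -> {subset avars a <= vs}) ->
  all (semM f) (lift_cq k q) = all (sat_atom g) q.
Proof.
move=> Hf; rewrite all_lift; elim: q => [|a q IH] Hs; first by [].
transitivity (semM f (lift_atom k a) && all (fun a => semM f (lift_atom k a)) q); first by [].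
rewrite (sem_lift_g Hf) ?IH //; first by move=> b Hb; apply: Hs; right.
by apply: Hs; left.
Qed.

Lemma lift_venus_all (f : Y -> E) k : k < J -> (forall x, f (k, Some x) = ven) ->
  all (semM f) (lift_cq k (phi k)).
Proof.
move=> Hk Hf; rewrite all_lift.
have Ho := HPo (In_nth [::] Hk); have Hp := HPp (In_nth [::] Hk).
suff: forall q', (forall a, List.In a q' -> List.In a (phi k)) ->
   all (fun a => semM f (lift_atom k a)) q' by apply.
elim=> //= a q IH Hq; rewrite IH ?andbT; last by move=> b Hb; apply: Hq; right.
have Ha := Hq a (or_introl erefl).
by apply: sem_lift_venus => //; [apply: Ho | apply: Hp].
Qed.

Lemma sat_ven : all (semM (fun _ : Y => ven)) U.
Proof.
apply: satU_intro => [k _|k k' _ _|k Hk|k y _ _].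
- by rewrite /vm eqxx.
- by rewrite eqxx.
- exact: lift_venus_all.
- by rewrite sem_V_venus.
Qed.

Definition hV : H := finfun (fun _ : seq_sub V => (ven : elt (marsify D))).

Lemma ext_hV y : ext hV y = ven.
Proof. by rewrite /ext; case: insub => [u|] //=; rewrite ffunE. Qed.

Lemma P_hV : all (sat_atom hV) U.
Proof.
by rewrite P_E (@all_semT_in _ _ (marsify D) _ (fun _ => ven)) ?sat_ven // => y _; rewrite ext_hV.
Qed.

Section J.
Variable j : nat.
Hypothesis Hj : j < J.
Notation W := (qvars (phi j)).

Definition fG (g : {ffun seq_sub W -> elt D}) (y : Y) : E :=
  match y with
  | (k, None) => if k == j then mar else ven
  | (k, Some x) => if k == j then
                     (match insub x with Some x' => inl (g x') | None => ven end)
                   else ven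
  end.

Lemma fG_sat g : all (sat_atom g) (phi j) -> all (semM (fG g)) U.
Proof.
move=> Hg; apply: satU_intro => [k _|k k' Hkk Hk'|k Hk|k y Hk Hy].
- by rewrite /vm /fG /=; case: (k == j).
- rewrite /fG /=; case: (eqVneq k j) => [Ek|Hne]; last by rewrite eqxx.
  case: (eqVneq k' j) => [Ek'|Hne']; last by rewrite eqxx orbT.
  by move: Hkk; rewrite Ek Ek' ltnn.
- case: (eqVneq k j) => [->|Hne].
  + rewrite (@all_lift_g _ _ _ g) // => [x|a Ha].
      by rewrite /fG eqxx valK.
    exact: avars_sub_qvars.
  + by apply: lift_venus_all => // x; rewrite /fG (negbTE Hne).
- case: (qvars_lift Hy) => x -> Hx.
  case: (eqVneq k j) => [Ek|Hne].
  + rewrite (@sem_V_mars _ _ _ _ k); last by rewrite /fG Ek eqxx.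
    rewrite /fG Ek eqxx; case: insubP => [u _ _|/negP] //.
    by rewrite -Ek.
  + by rewrite (@sem_V_venus _ _ _ _ k) /fG (negbTE Hne).
Qed.

Definition Gm (g : {ffun seq_sub W -> elt D}) : H := [ffun u => fG g (val u)].

Lemma P_G g : all (sat_atom g) (phi j) -> all (sat_atom (Gm g)) U.
Proof.
move=> Hg; rewrite (@all_satE _ _ (marsify D) _ _ (fG g)); first exact: fG_sat.
  by move=> u; rewrite ffunE.
by move=> a Ha; apply: avars_sub_qvars.
Qed.

Lemma ext_G g : ext (Gm g) (j, None) = mar.
Proof.
rewrite /ext; case: insubP => [u _ Eu|/negP []] /=; last exact: memV_none Hj.
by rewrite ffunE Eu /fG eqxx.
Qed.

Lemma G_inj : injective Gm.
Proof.
move=> g1 g2 E12; apply/ffunP => x.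
have Hy := memV_some Hj (valP x).
have := congr1 (fun h : H => h (Sub (j, Some (val x)) Hy)) E12.
by rewrite !ffunE SubK /fG eqxx valK => [[]].
Qed.

Lemma Hven (h : H) k : all (semM (ext h)) U -> ext h (j, None) = mar ->
  k < J -> k != j -> ext h (k, None) = ven.
Proof.
move=> HU Hm Hk Hne; case: (satU_inv HU) => H1 H2 _ _.
move: (H1 k Hk); rewrite /vm => /orP [/eqP //|/eqP Hmk].
case: (ltngtP k j) => [Hkj|Hjk|Ekj].
- by move: (H2 k j Hkj Hj); rewrite Hmk Hm eqxx.
- by move: (H2 j k Hjk Hk); rewrite Hmk Hm eqxx.
- by move: Hne; rewrite Ekj eqxx.
Qed.

Lemma count_j :
  \sum_(h : H) (all (sat_atom h) U && (ext h (j, None) == mar)) = cq_count D (phi j).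
Proof.
transitivity #|[set h : H | all (sat_atom h) U && (ext h (j, None) == mar)]|.
  rewrite -sum1_card [RHS]big_mkcond /=; apply: eq_bigr => h _; rewrite inE.
  by case: (_ && _).
rewrite /cq_count -cardsE -(card_in_imset (f := Gm)); last by move=> g1 g2 _ _; apply: G_inj.
apply: eq_card => h; rewrite !inE; apply/andP/imsetP.
- case=> Hs /eqP Hm.
  have HU : all (semM (ext h)) U by rewrite -P_E.
  case: (satU_inv HU) => H1 H2 H3 H4.
  have Hg : forall x : seq_sub W, {a | ext h (j, Some (val x)) = inl a}.
    move=> x; have := H4 j (j, Some (val x)) Hj (qvars_lift2 j (valP x)).
    rewrite (@sem_V_mars _ _ _ _ j) //.
    case: (ext h (j, Some (val x))) => [a|b] Hb; first by exists a.
    by exfalso; move: Hb.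
  pose g := [ffun x => sval (Hg x)].
  have Eg : forall x, ext h (j, Some (val x)) = inl (g x).
    by move=> x; rewrite ffunE; exact: (svalP (Hg x)).
  exists g.
    rewrite inE -(@all_lift_g (ext h) j) //; first exact: H3.
    by move=> a Ha; apply: avars_sub_qvars.
  apply/ffunP => u; rewrite ffunE -extE.
  have := mem_V (valP u); case: (val u) => k o /= [Hk Ho].
  case: o Ho => [x|] Ho.
  + case: Ho => // Ho; case: (qvars_lift Ho) => x' [Ex] Hx'; subst x'.
    rewrite /fG; case: (eqVneq k j) => [Ek|Hne].
    * subst k; case: insubP => [u' _ Eu|/negP []] //; first by rewrite -Eu Eg.
    * have Hv := Hven HU Hm Hk Hne.
      by move: (H4 k _ Hk Ho); rewrite (@sem_V_venus _ _ _ _ k) // => /eqP.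
  + rewrite /fG; case: (eqVneq k j) => [->|Hne] //.
    exact: Hven HU Hm Hk Hne.
- case=> g; rewrite inE => Hg ->; split; first exact: P_G.
  by rewrite ext_G.
Qed.

End J.

Lemma sum_le1 (p : nat -> bool) n :
  (forall a b, a < b -> b < n -> ~~ (p a && p b)) -> \sum_(0 <= k < n) p k <= 1.
Proof.
elim: n => [|n IH] Hp; first by rewrite big_geq.
rewrite big_nat_recr //=; case: (boolP (p n)) => Hn.
  rewrite big1_seq ?add0n // => k; rewrite mem_index_iota /= => Hk.
  by move: (Hp k n Hk (ltnSn n)); rewrite Hn andbT => /negbTE ->.
rewrite addn0; apply: IH => a b Hab Hb; apply: Hp Hab _.
exact: leqW.
Qed.

Lemma part (h : H) : (all (sat_atom h) U : nat) =
  (h == hV) + \sum_(0 <= k < J) (all (sat_atom h) U && (ext h (k, None) == mar)).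
Proof.
case: (boolP (all (sat_atom h) U)) => HP; last first.
  have -> : (h == hV) = false by apply/negbTE/eqP => Eh; move: HP; rewrite Eh P_hV.
  by rewrite big1.
have HU : all (semM (ext h)) U by rewrite -P_E.
case: (satU_inv HU) => H1 H2 H3 H4.
rewrite /=.
case: (boolP (has (fun k => ext h (k, None) == mar) (iota 0 J))).
- case/hasP => j; rewrite mem_iota add0n => /andP [_ Hj] Hmj.
  have -> : (h == hV) = false.
    apply/negbTE/eqP => Eh; move: Hmj; by rewrite Eh ext_hV.
  apply/eqP; rewrite add0n eqn_leq sum_le1 /=; last first.
    by move=> a b Hab Hb; apply: H2.
  by rewrite (bigD1_seq j) ?mem_index_iota ?Hj ?iota_uniq //= Hmj.
- move/hasPn => Hn.
  rewrite big1_seq ?addn0; last first.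
    move=> k; rewrite mem_index_iota /= => Hk.
    by rewrite (negbTE (Hn k _)) // mem_iota add0n Hk.
  have -> : h == hV; last by [].
  apply/eqP/ffunP => u; rewrite ffunE -extE.
  have Hven : forall k, k < J -> ext h (k, None) = ven.
    move=> k Hk; move: (H1 k Hk); rewrite /vm => /orP [/eqP //|Hm].
    by move: (Hn k); rewrite mem_iota add0n Hk Hm => /(_ isT).
  have := mem_V (valP u); case: (val u) => k o /= [Hk Ho].
  case: o Ho => [x|] Ho; last exact: Hven.
  case: Ho => // Ho.
  move: (H4 k _ Hk Ho); rewrite (@sem_V_venus _ _ _ _ k _ (Hven k Hk)) => /eqP; apply.
Qed.

Lemma card_sum (T : finType) (P : pred T) : #|P| = \sum_(x : T) P x.
Proof.
rewrite -sum1_card [LHS]big_mkcond /=; apply: eq_bigr => x _.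
by rewrite unfold_in; case: (P x).
Qed.

Lemma count_cqU : cq_count M U = (1 + ucq_count D Phi)%N.
Proof.
rewrite /cq_count card_sum /=.
rewrite (eq_bigr _ (fun h _ => part h)) big_split /=.
congr (_ + _).
  by rewrite (bigD1 hV) //= eqxx big1 // => h /negbTE ->.
rewrite exchange_big /= /ucq_count (big_nth [::]) /=.
by apply: eq_big_nat => k /andP [_ Hk]; rewrite count_j.
Qed.

End Main.

Lemma wf_marsify (S : signature) (D : structure S) :
  wf_structure D -> wf_structure (marsify D).
Proof.
move=> HD [A|[]] s /=.
- case/orP => [/and3P [/eqP -> _ _] // | /andP [Hs Hf]].
  rewrite -(HD _ _ Hf).
  by elim: s Hs {Hf} => //= e s IH /andP [He /IH ->]; case: e He.
- by move/orP => [/orP [/eqP -> | /eqP ->] | /eqP ->].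
- by case/orP => [/eqP -> //|]; case: s => [|x [|y [|z s]]] //=; rewrite andbF.
Qed.

Theorem mainTheorem11 (S : signature) (Xs Xb : choiceType)
  (Phis : ucq S Xs) (Phib : ucq S Xb) (D : structure S) :
  ucq_over Phis -> pleasant_ucq Phis ->
  ucq_over Phib -> pleasant_ucq Phib ->
  wf_structure D ->
  ucq_count D Phib < ucq_count D Phis ->
  cq_count (marsify D) (cqU Phib) < cq_count (marsify D) (cqU Phis) /\
  ~ le_forall (cqU Phis) (cqU Phib).
Proof.
move=> Hso Hsp Hbo Hbp HD Hlt.
have Hc : cq_count (marsify D) (cqU Phib) < cq_count (marsify D) (cqU Phis).
  by rewrite !count_cqU // ltn_add2l.
split => // Hle.
by move: (Hle (marsify D) (wf_marsify HD)); rewrite leqNgt Hc.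
Qed.
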